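(* Let $\mathcal A$ be a toric arrangement in $T$ equal to its saturation, let $\mathcal F$ be a smooth projective fan compatible with $\mathcal A$, let $\mathcal G$ be a smooth projective refinement of $\mathcal F$, and let $\psi^{\mathcal F}_{\mathcal G}:X_{\mathcal G}\to X_{\mathcal F}$ be the unique $T$-equivariant projective morphism of toric varieties extending the identity of $T$. Then for each layer $\mathcal K_{\Gamma,\phi}\in\mathcal A$, the preimage under $\psi^{\mathcal F}_{\mathcal G}$ of the closure of $\mathcal K_{\Gamma,\phi}$ in $X_{\mathcal F}$ equals the closure of $\mathcal K_{\Gamma,\phi}$ in $X_{\mathcal G}$. (In particular $\mathcal G$ is also compatible with $\mathcal A$.)
   Context: $T$ is a complex algebraic torus with character lattice $X^*(T)$, $V=X_*(T)\otimes\mathbb R$. A layer is $\mathcal K_{\Gamma,\phi}=\{t\in T:\chi(t)=\phi(\chi)\ \forall\chi\in\Gamma\}$, where $\Gamma$ is a split direct summand of $X^*(T)$ and $\phi:\Gamma\to\mathbb C^*$ a homomorphism. A toric arrangement is a finite set of layers; its saturation is the set of all connected components of intersections of its layers, and we assume $\mathcal A$ equals its saturation. For a toric variety, $X_{\mathcal F}$ denotes the smooth projective $T$-toric variety of the smooth projective fan $\mathcal F$. A finite set $\{\chi_1,\dots,\chi_s\}\subset X^*(T)$ has equal sign with respect to $\mathcal F$ if each function $\langle\chi_i,-\rangle$ is either $\ge0$ on $C$ or $\le 0$ on $C$ for every cone $C\in\mathcal F$. $\mathcal F$ is compatible with $\mathcal A$ if for every pair of layers $\mathcal K_{\Gamma,\phi}\subseteq\mathcal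 K_{\Gamma',\psi}$ in $\mathcal A$ there is an integral basis of $\Gamma$ having equal sign with respect to $\mathcal F$ whose intersection with $\Gamma'$ is a basis of $\Gamma'$ (having equal sign). A refinement $\mathcal G$ of $\mathcal F$ is a fan each of whose cones is contained in a cone of $\mathcal F$ and such that every cone of $\mathcal F$ is a union of cones of $\mathcal G$. *)

(* Defs.v *)
From mathcomp Require Import all_boot all_algebra.
From mathcomp Require Import reals.
From mathcomp.real_closed Require Import complex.
Set Implicit Arguments. Unset Strict Implicit. Unset Printing Implicit Defensive.
Import GRing.Theory Num.Theory.
Local Open Scope ring_scope.
Local Open Scope complex_scope.

Section Toric.
Variables (R : realType) (n : nat).

(* X^*(T) = Z^n (characters), V = X_*(T) (x) R = R^n, T = (C^* )^n *)
Definition lat := 'rV[int]_n.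
Definition pt := 'rV[R[i]]_n.

Definition pairing (m : lat) (v : 'rV[R]_n) : R := \sum_i (m 0 i)%:~R * v 0 i.
Definition dotR (u v : 'rV[R]_n) : R := \sum_i u 0 i * v 0 i.

Definition cone (g : seq lat) (v : 'rV[R]_n) : Prop :=
  exists a : seq R, size a = size g /\ (forall i, 0 <= a`_i) /\
    v = \sum_(i < size g) a`_i *: map_mx (fun z : int => z%:~R) g`_i.

Definition cone_sub (g h : seq lat) := forall v, cone g v -> cone h v.

Definition dual_vec (g : seq lat) (u : 'rV[R]_n) := forall v, cone g v -> 0 <= dotR u v.
Definition face_set (g : seq lat) (u : 'rV[R]_n) v := cone g v /\ dotR u v = 0.

Definition is_fan (F : seq (seq lat)) : Prop :=
  (forall g, g \in F -> forall v, cone g v -> cone g (- v) -> v = 0) /\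
  (forall g, g \in F -> forall u, dual_vec g u ->
      exists2 f, f \in F & forall v, cone f v <-> face_set g u v) /\
  (forall g h, g \in F -> h \in F ->
      (exists u, dual_vec g u /\ forall v, (cone g v /\ cone h v) <-> face_set g u v) /\
      (exists u, dual_vec h u /\ forall v, (cone g v /\ cone h v) <-> face_set h u v)).

Definition smooth_fan (F : seq (seq lat)) : Prop :=
  forall g, g \in F -> uniq g /\
    exists2 P : 'M[int]_n, P \in unitmx & forall x, x \in g -> exists i, x = row i P.

Definition complete_fan (F : seq (seq lat)) : Prop :=
  forall v, exists2 g, g \in F & cone g v.

Definition maximal_cone (F : seq (seq lat)) g :=
  g \in F /\ forall h, h \in F -> cone_sub g h -> cone_sub h g.

(* projective: existence of a strictly convex piecewise-linear support function
   h(v) = max_sigma <l_sigma, v>, the max being attained exactly on the maximal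
   cones containing v *)
Definition projective_fan (F : seq (seq lat)) : Prop :=
  exists l : seq lat -> 'rV[R]_n, forall g h, maximal_cone F g -> maximal_cone F h ->
    forall v, cone g v ->
      dotR (l h) v <= dotR (l g) v /\ (dotR (l h) v = dotR (l g) v -> cone h v).

Definition smooth_projective_fan F :=
  [/\ is_fan F, smooth_fan F, complete_fan F & projective_fan F].

Definition refinement (G F : seq (seq lat)) : Prop :=
  (forall g, g \in G -> exists2 f, f \in F & cone_sub g f) /\
  (forall f, f \in F -> forall v, cone f v ->
      exists2 g, g \in G & cone_sub g f /\ cone g v).

Definition subgroup (S : pred lat) := S 0 /\ forall x y, S x -> S y -> S (x - y).
Definition split_summand (S : pred lat) :=
  subgroup S /\ exists S' : pred lat, subgroup S' /\
    (forall x, exists a b, [/\ S a, S' b & x = a + b]) /\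
    (forall x, S x -> S' x -> x = 0).

Definition zcomb (c : seq int) (B : seq lat) : lat := \sum_(i < size B) c`_i *: B`_i.
Definition int_basis (S : pred lat) (B : seq lat) :=
  (forall c, size c = size B -> zcomb c B = 0 -> forall i, c`_i = 0) /\
  (forall x, S x <-> exists c, size c = size B /\ x = zcomb c B).

Definition char_eval (m : lat) (t : pt) : R[i] := \prod_i t 0 i ^ (m 0 i).
Definition torus (t : pt) := forall i, t 0 i != 0.

Record layer := Layer { Gam : pred lat; phi : lat -> R[i] }.

Definition is_layer (L : layer) :=
  [/\ split_summand (Gam L),
      forall a b, Gam L a -> Gam L b -> phi L (a + b) = phi L a * phi L b &
      forall a, Gam L a -> phi L a != 0].

Definition layer_set (L : layer) (t : pt) : Prop :=
  torus t /\ forall m, Gam L m -> char_eval m t = phi L m.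

Definition near (x y : pt) (e : R) := forall i, `|y 0 i - x 0 i| < e%:C.
Definition open_in (X U : pt -> Prop) :=
  (forall t, U t -> X t) /\
  forall x, U x -> exists e : R, 0 < e /\ forall y, X y -> near x y e -> U y.
Definition connected (X : pt -> Prop) :=
  forall U V, open_in X U -> open_in X V -> (forall t, X t -> U t \/ V t) ->
    (forall t, ~ (U t /\ V t)) -> (forall t, ~ U t) \/ (forall t, ~ V t).
Definition component (X Y : pt -> Prop) :=
  [/\ (forall t, Y t -> X t), (exists t, Y t), connected Y &
      forall Z, (forall t, Y t -> Z t) -> (forall t, Z t -> X t) -> connected Z ->
        forall t, Z t -> Y t].

Definition saturated k (A : 'I_k -> layer) :=
  forall Y : pt -> Prop,
    (exists i, forall t, layer_set (A i) t <-> Y t) <->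
    (exists S : {set 'I_k}, S != set0 /\
       component (fun t => forall i, i \in S -> layer_set (A i) t) Y).

Definition equal_sign (F : seq (seq lat)) (B : seq lat) :=
  forall x, x \in B -> forall g, g \in F ->
    (forall v, cone g v -> 0 <= pairing x v) \/ (forall v, cone g v -> pairing x v <= 0).

Definition compatible (F : seq (seq lat)) k (A : 'I_k -> layer) :=
  forall i j, (forall t, layer_set (A i) t -> layer_set (A j) t) ->
    exists B, [/\ int_basis (Gam (A i)) B, equal_sign F B &
                  int_basis (Gam (A j)) [seq x <- B | Gam (A j) x]].

(* affine toric chart U_sigma = Specm C[sigma^vee cap M]: its points are unital
   monoid morphisms (sigma^vee cap M, +) -> (C, * ) *)
Definition dual_lat (g : seq lat) (m : lat) := forall v, cone g v -> 0 <= pairing m v.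
Definition chart_point (g : seq lat) (x : lat -> R[i]) :=
  x 0 = 1 /\ forall a b, dual_lat g a -> dual_lat g b -> x (a + b) = x a * x b.

(* x in U_sigma lies in the (Zariski) closure of K (subset T) in U_sigma:
   every regular function on U_sigma vanishing on K vanishes at x *)
Definition in_closure (g : seq lat) (K : pt -> Prop) (x : lat -> R[i]) :=
  forall k (c : 'I_k -> R[i]) (m : 'I_k -> lat), (forall j, dual_lat g (m j)) ->
    (forall t, K t -> \sum_j c j * char_eval (m j) t = 0) ->
    \sum_j c j * x (m j) = 0.

End Toric.

(* Main.v *)
Require Import Defs.
From mathcomp Require Import all_boot all_algebra.
From mathcomp Require Import reals.
From mathcomp.real_closed Require Import complex.
From Stdlib Require Import ClassicalEpsilon Classical.
From mathcomp Require Import ring.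
Set Implicit Arguments. Unset Strict Implicit. Unset Printing Implicit Defensive.
Import GRing.Theory Num.Theory.
Local Open Scope ring_scope.

Section Aux.
Variables (R : realType) (n : nat).
Local Notation C := (complex R).
Local Notation lat := (lat n).
Local Notation pt := (pt R n).

Lemma char_evalD (a b : lat) (t : pt) : torus t ->
  char_eval (a + b) t = char_eval a t * char_eval b t.
Proof.
move=> Ht; rewrite /char_eval -big_split /=; apply: eq_bigr => i _.
by rewrite mxE exprzDr // unitfE Ht.
Qed.

Lemma char_eval0 (t : pt) : char_eval 0 t = 1.
Proof. by rewrite /char_eval big1 // => i _; rewrite mxE expr0z. Qed.

Lemma char_eval_neq0 (m : lat) (t : pt) : torus t -> char_eval m t != 0.
Proof. by move=> Ht; apply/prodf_neq0 => i _; apply: expfz_neq0. Qed.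

Definition mulpt (t s : pt) : pt := \row_i (t 0 i * s 0 i).

Lemma torusM (t s : pt) : torus t -> torus s -> torus (mulpt t s).
Proof. by move=> Ht Hs i; rewrite mxE mulf_neq0. Qed.

Lemma char_evalM (m : lat) (t s : pt) : torus t -> torus s ->
  char_eval m (mulpt t s) = char_eval m t * char_eval m s.
Proof.
move=> Ht Hs; rewrite /char_eval -big_split /=; apply: eq_bigr => i _.
by rewrite mxE exprzMl // unitfE.
Qed.

Lemma hom_point (psi : lat -> C) : (forall a b, psi (a + b) = psi a * psi b) ->
  (forall a, psi a != 0) ->
  exists t : pt, torus t /\ forall m, char_eval m t = psi m.
Proof.
move=> hD h0.
have psi0 : psi 0 = 1.
  apply: (mulfI (h0 0)); by rewrite mulr1 -hD addr0.
have psiN a : psi (- a) = (psi a)^-1.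
  apply: (mulfI (h0 a)); by rewrite -hD subrr psi0 divff.
have psiMn a k : psi (a *+ k) = psi a ^+ k.
  elim: k => [|k IH]; first by rewrite mulr0n expr0.
  by rewrite mulrS exprS hD IH.
have psiz a z : psi (a *~ z) = psi a ^ z.
  case: z => k /=; first by rewrite -exprnP psiMn.
  by rewrite psiN psiMn.
exists (\row_j psi 'e_j); split; first by move=> i; rewrite mxE.
move=> m; rewrite [in RHS](row_sum_delta m).
rewrite (big_morph psi hD psi0) /char_eval; apply: eq_bigr => j _.
by rewrite mxE -[m 0 j]intz scaler_int psiz intz.
Qed.

End Aux.

Section Sub.
Variables (n : nat) (S : pred (lat n)).
Hypothesis HS : subgroup S.
Lemma sg0 : S 0. Proof. by case: HS. Qed.
Lemma sgB x y : S x -> S y -> S (x - y). Proof. by case: HS => _; apply. Qed.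
Lemma sgN x : S x -> S (- x). Proof. by move=> h; rewrite -sub0r; apply: sgB => //; apply: sg0. Qed.
Lemma sgD x y : S x -> S y -> S (x + y).
Proof. by move=> hx hy; rewrite -[y]opprK; apply: sgB => //; apply: sgN. Qed.
Lemma sgMn x k : S x -> S (x *+ k).
Proof. move=> hx; elim: k => [|k IH]; first by rewrite mulr0n sg0. by rewrite mulrS sgD. Qed.
End Sub.

Section Layer.
Variables (R : realType) (n : nat) (L : layer R n).
Hypothesis HL : is_layer L.
Local Notation C := (complex R).
Local Notation lat := (lat n).
Local Notation pt := (pt R n).
Local Notation Gm := (Gam L).
Local Notation ph := (phi L).

Lemma GmS : subgroup Gm. Proof. by case: HL => [[]]. Qed.
Lemma phD a b : Gm a -> Gm b -> ph (a + b) = ph a * ph b. Proof. by case: HL => _ H _; apply: H. Qed.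
Lemma ph_neq0 a : Gm a -> ph a != 0. Proof. by case: HL => _ _ H; apply: H. Qed.

Lemma proj_ex : exists proj : lat -> lat, exists S' : pred lat, subgroup S' /\
  (forall x, Gm (proj x) /\ S' (x - proj x)) /\ (forall x, Gm x -> S' x -> x = 0).
Proof.
case: HL => [[_ [S' [HS' [Hdec Hint]]]] _ _].
have H x : exists a, Gm a /\ S' (x - a).
  have [a [b [ha hb ->]]] := Hdec x; exists a; split => //; by rewrite addrC addKr.
exists (fun x => proj1_sig (constructive_indefinite_description _ (H x))), S'.
split; first exact: HS'. split; last exact: Hint.
move=> x; exact: proj2_sig (constructive_indefinite_description _ (H x)).
Qed.

Lemma proj_spec : exists proj : lat -> lat,
  [/\ forall x, Gm (proj x), forall a b, proj (a + b) = proj a + proj b,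
      forall x, Gm x -> proj x = x & forall x, proj x = x -> Gm x].
Proof.
have [proj [S' [HS' [Hp Hint]]]] := proj_ex.
exists proj; split.
- by move=> x; case: (Hp x).
- move=> a b; apply/eqP; rewrite -subr_eq0; apply/eqP; apply: Hint.
    apply: sgB; first exact: GmS. by case: (Hp (a+b)). by apply: sgD; [exact: GmS|case: (Hp a)|case: (Hp b)].
  have -> : proj (a + b) - (proj a + proj b) =
     (a - proj a) + (b - proj b) - (a + b - proj (a + b)) by apply/rowP => j; rewrite !mxE; ring.
  apply: sgB => //; last by case: (Hp (a+b)).
  by apply: sgD => //; [case: (Hp a)|case: (Hp b)].
- move=> x hx; apply/eqP; rewrite -subr_eq0; apply/eqP; apply: Hint.
    by apply: sgB; [exact: GmS|case: (Hp x)|].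
  have -> : proj x - x = 0 - (x - proj x) by apply/rowP => j; rewrite !mxE; ring.
  by apply: sgB => //; [exact: sg0|case: (Hp x)].
- by move=> x <-; case: (Hp x).
Qed.

Lemma ph0 : ph 0 = 1.
Proof.
have h0 := sg0 GmS; apply: (mulfI (ph_neq0 h0)).
by rewrite mulr1 -phD // addr0.
Qed.

Lemma K_ne : exists t, layer_set L t.
Proof.
have [proj [Hp HD Hid _]] := proj_spec.
have h1 : forall a b, ph (proj (a + b)) = ph (proj a) * ph (proj b).
  by move=> a b; rewrite HD phD.
have h2 : forall a, ph (proj a) != 0 by move=> a; apply: ph_neq0.
have [t [Ht Hc]] := @hom_point R n (fun m => ph (proj m)) h1 h2.
exists t; split => // m hm; by rewrite Hc Hid.
Qed.

Definition Hpt (s : pt) := torus s /\ forall g, Gm g -> char_eval g s = 1.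

Lemma sep d : ~~ Gm d -> exists s, Hpt s /\ char_eval d s != 1.
Proof.
move=> hd.
have [proj [Hp HD Hid Hback]] := proj_spec.
have [i hi] : exists i, (d - proj d) 0 i != 0.
  apply/not_all_not_ex => hall; move/negP: hd; apply; apply: Hback.
  apply/eqP; rewrite eq_sym -subr_eq0; apply/eqP/rowP => j; rewrite [RHS]mxE.
  by apply/eqP/negPn/negP; apply: hall.
have h2 : (2 : C) \is a GRing.unit by rewrite unitfE pnatr_eq0.
have h1 : forall a b, (2 : C) ^ ((a + b - proj (a + b)) 0 i) =
   (2 : C) ^ ((a - proj a) 0 i) * (2 : C) ^ ((b - proj b) 0 i).
  move=> a b; rewrite HD -exprzDr //; congr (_ ^ _).
  by rewrite !mxE; ring.
have h3 : forall a, (2 : C) ^ ((a - proj a) 0 i) != 0.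
  by move=> a; apply: expfz_neq0; rewrite pnatr_eq0.
have [s [Hs Hc]] := @hom_point R n (fun m => (2 : C) ^ ((m - proj m) 0 i)) h1 h3.
exists s; split.
- split => // g hg; by rewrite Hc Hid // subrr mxE expr0z.
- by rewrite Hc pexprz_eq1 ?ler0n // negb_or hi /= order.Order.POrderTheory.gt_eqF // ltr1n.
Qed.

Definition hs (s : seq (C * lat)) (t : pt) := \sum_(p <- s) p.1 * char_eval p.2 t.

Lemma layer_shift m m' t : layer_set L t -> Gm (m - m') ->
  char_eval m t = char_eval m' t * ph (m - m').
Proof.
move=> [Ht Hl] hg; rewrite -Hl // -char_evalD //; congr char_eval.
by rewrite addrC subrK.
Qed.

Lemma KH t s : layer_set L t -> Hpt s -> layer_set L (mulpt t s).
Proof.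
move=> [Ht Hl] [Hs Hh]; split; first exact: torusM.
by move=> m hm; rewrite char_evalM // Hl // Hh // mulr1.
Qed.

Lemma W m0 (s2 : seq (C * lat)) a : (forall p, p \in s2 -> ~~ Gm (p.2 - m0)) ->
  (forall t, layer_set L t -> a * char_eval m0 t + hs s2 t = 0) -> a = 0.
Proof.
have [N] := ubnP (size s2); elim: N s2 a => // N IH [|[c1 m1] s3] a Hsz Hs2 Hv.
  have [t0 Kt0] := K_ne; have := Hv t0 Kt0; rewrite /hs big_nil addr0 => /eqP.
  by rewrite mulf_eq0 (negbTE (char_eval_neq0 _ _)) ?orbF; [move/eqP|case: Kt0].
have [s [Hs Hne]] := sep (Hs2 _ (mem_head _ _)).
set e0 := char_eval m0 s; set e1 := char_eval m1 s.
have He : e0 - e1 != 0.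
  rewrite subr_eq0 /e1 -[m1](subrK m0) char_evalD; last by case: Hs.
  apply/eqP => h; move: Hne => /=; rewrite -/e0 in h *.
  have h0 : e0 != 0 by apply: char_eval_neq0; case: Hs.
  suff -> : char_eval (m1 - m0) s = 1 by rewrite eqxx.
  by apply: (mulIf h0); rewrite mul1r -h.
suff : a * (e0 - e1) = 0 by move/eqP; rewrite mulf_eq0 (negbTE He) orbF => /eqP.
apply: (IH [seq (p.1 * (char_eval p.2 s - e1), p.2) | p <- s3]).
  by rewrite size_map.
  move=> p /mapP [q hq ->] /=; apply: Hs2; by rewrite in_cons hq orbT.
move=> t Kt; have h1 := Hv _ (KH Kt Hs); have h2 := Hv _ Kt.
move: h1 h2; rewrite /hs !big_cons big_map /=.
have [Ht _] := Kt; have [Hst _] := Hs.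
rewrite !char_evalM // -/e0 -/e1.
have -> : \sum_(p <- s3) p.1 * char_eval p.2 (mulpt t s) =
   \sum_(p <- s3) p.1 * (char_eval p.2 t * char_eval p.2 s).
  by apply: eq_bigr => p _; rewrite char_evalM.
have -> : \sum_(p <- s3) p.1 * (char_eval p.2 s - e1) * char_eval p.2 t =
   \sum_(p <- s3) p.1 * (char_eval p.2 t * char_eval p.2 s) - e1 * \sum_(p <- s3) p.1 * char_eval p.2 t.
  rewrite mulr_sumr -sumrB; apply: eq_bigr => p _; ring.
move=> h1 h2.
set X := \sum_(p <- s3) _; set Y := \sum_(p <- s3) _ in h2 *.
have E : a * (e0 - e1) * char_eval m0 t + (X - e1 * Y) =
  (a * (char_eval m0 t * e0) + (c1 * (char_eval m1 t * e1) + X)) -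
  e1 * (a * char_eval m0 t + (c1 * char_eval m1 t + Y)) by ring.
by rewrite E h1 h2 mulr0 subr0.
Qed.

Lemma Z (g : seq lat) (x : lat -> C)
  (Hx : forall m m', dual_lat R g m -> dual_lat R g m' -> Gm (m - m') ->
          x m = x m' * ph (m - m'))
  (s : seq (C * lat)) :
  (forall p, p \in s -> dual_lat R g p.2) ->
  (forall t, layer_set L t -> hs s t = 0) ->
  \sum_(p <- s) p.1 * x p.2 = 0.
Proof.
have [N] := ubnP (size s); elim: N s => // N IH [|[c0 m0] s'] Hsz Hd Hv.
  by rewrite big_nil.
pose P := fun p : C * lat => Gm (p.2 - m0).
set s1 := [seq p <- s' | P p]; set s2 := [seq p <- s' | ~~ P p].
have Hsplit (F : C * lat -> C) :
    \sum_(p <- s') F p = \sum_(p <- s1) F p + \sum_(p <- s2) F p.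
  by rewrite !big_filter [LHS](bigID P).
have Hd0 : dual_lat R g m0 by apply: (Hd (c0, m0)); rewrite mem_head.
have Hd' p : p \in s' -> dual_lat R g p.2.
  by move=> hp; apply: Hd; rewrite in_cons hp orbT.
set a := c0 + \sum_(p <- s1) p.1 * ph (p.2 - m0).
have Hv2 t : layer_set L t -> a * char_eval m0 t + hs s2 t = 0.
  move=> Kt; rewrite -(Hv t Kt) /hs big_cons Hsplit addrA; congr (_ + _).
  rewrite /a mulrDl; congr (_ + _); rewrite mulr_suml.
  apply: eq_big_seq => p; rewrite mem_filter => /andP [hP _].
  by rewrite (layer_shift Kt hP); ring.
have a0 : a = 0.
  apply: (W (s2 := s2)) Hv2 => p; by rewrite mem_filter => /andP [].
have IH2 : \sum_(p <- s2) p.1 * x p.2 = 0.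
  apply: IH.
  - rewrite -ltnS (leq_ltn_trans _ Hsz) // ltnS size_filter; exact: count_size.
  - by move=> p; rewrite mem_filter => /andP [_ /Hd'].
  - by move=> t Kt; have := Hv2 t Kt; rewrite a0 mul0r add0r.
rewrite big_cons Hsplit IH2 addr0.
have -> : \sum_(p <- s1) p.1 * x p.2 = \sum_(p <- s1) p.1 * (x m0 * ph (p.2 - m0)).
  apply: eq_big_seq => p; rewrite mem_filter => /andP [hP hp].
  by rewrite (Hx _ _ (Hd' _ hp) Hd0 hP).
transitivity (x m0 * a); last by rewrite a0 mulr0.
rewrite /a mulrDr mulr_sumr; congr (_ + _); first by rewrite mulrC.
by apply: eq_bigr => p _; ring.
Qed.

Lemma pairingD (m1 m2 : lat) (v : 'rV[R]_n) : pairing (m1 + m2) v = pairing m1 v + pairing m2 v.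
Proof. by rewrite /pairing -big_split; apply: eq_bigr => i _; rewrite mxE intrD mulrDl. Qed.

Lemma pairingN (m : lat) (v : 'rV[R]_n) : pairing (- m) v = - pairing m v.
Proof. by rewrite /pairing -sumrN; apply: eq_bigr => i _; rewrite mxE intrN mulNr. Qed.

Lemma pairing0 (v : 'rV[R]_n) : pairing (0 : lat) v = 0.
Proof. by rewrite /pairing big1 // => i _; rewrite mxE mul0r. Qed.

Lemma dual0 (f : seq lat) : dual_lat R f 0.
Proof. by move=> v _; rewrite pairing0. Qed.

Lemma dualD (f : seq lat) (a b : lat) : dual_lat R f a -> dual_lat R f b -> dual_lat R f (a + b).
Proof. by move=> ha hb v hv; rewrite pairingD addr_ge0 ?ha ?hb. Qed.

Lemma dualMn (f : seq lat) (a : lat) k : dual_lat R f a -> dual_lat R f (a *+ k).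
Proof.
move=> ha; elim: k => [|k IH]; first by rewrite mulr0n; apply: dual0.
by rewrite mulrS; apply: dualD.
Qed.

Definition Dset (f : seq lat) (d : lat) := exists P N,
  [/\ Gm P, Gm N, dual_lat R f P, dual_lat R f N & d = P - N].

Lemma Dz (f : seq lat) (u : lat) z : Gm u -> dual_lat R f u -> Dset f (u *~ z).
Proof.
move=> hG hd; case: z => k.
  have -> : u *~ Posz k = u *+ k by [].
  exists (u *+ k), 0; split; rewrite ?subr0 //; first by move: (@sgMn n (Gam L) GmS u k hG).
  - by move: (sg0 GmS).
  - exact: dualMn.
  - exact: dual0.
have -> : u *~ Negz k = - (u *+ k.+1) by [].
exists 0, (u *+ k.+1); split; rewrite ?sub0r //.
- by move: (sg0 GmS).
- by move: (@sgMn n (Gam L) GmS u k.+1 hG).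
- exact: dual0.
- exact: dualMn.
Qed.

Lemma basis_mem (B : seq lat) i : int_basis Gm B -> (i < size B)%N -> Gm B`_i.
Proof.
move=> [_ Hb] hi; apply/Hb.
exists [seq ((j == i)%N)%:Z | j <- iota 0 (size B)]; split; first by rewrite size_map size_iota.
rewrite /zcomb (bigD1 (Ordinal hi)) //= big1 ?addr0.
  by rewrite (nth_map 0%N) ?size_iota // nth_iota // add0n eqxx scale1r.
move=> j hj; rewrite (nth_map 0%N) ?size_iota // nth_iota // add0n.
have -> : (j == i :> nat) = false.
  by apply/negbTE; apply: contra hj => /eqP h; apply/eqP/val_inj.
by rewrite scale0r.
Qed.

Lemma dec_lemma (f : seq lat) (B : seq lat) : int_basis Gm B ->
  (forall b, b \in B -> (forall v : 'rV[R]_n, cone f v -> 0 <= pairing b v) \/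
                        (forall v : 'rV[R]_n, cone f v -> pairing b v <= 0)) ->
  forall d, Gm d -> Dset f d.
Proof.
move=> HB Hsg d; have [_ Hb] := HB; move=> /Hb [c [Hc ->]].
rewrite /zcomb; apply: (big_ind (Dset f)).
- exists 0, 0; split; rewrite ?subr0 //; [by move: (sg0 GmS)|by move: (sg0 GmS)|exact: dual0|exact: dual0].
- move=> d1 d2 [P1 [N1 [h1 h2 h3 h4 ->]]] [P2 [N2 [h5 h6 h7 h8 ->]]].
  exists (P1 + P2), (N1 + N2); split.
  + by move: (sgD GmS h1 h5).
  + by move: (sgD GmS h2 h6).
  + exact: dualD.
  + exact: dualD.
  by apply/rowP => j; rewrite !mxE; ring.
- move=> i _; have hi := ltn_ord i.
  have hG := basis_mem HB hi.
  rewrite -[c`_i]intz scaler_int.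
  case: (Hsg _ (mem_nth 0 hi)) => hs.
    by apply: Dz.
  have -> : B`_i *~ c`_i = (- B`_i) *~ (- c`_i) by rewrite mulrNz mulNrz opprK.
  apply: Dz; first by move: (sgN GmS hG).
  by move=> v hv; rewrite pairingN oppr_ge0 hs.
Qed.

Lemma Hfix (f : seq lat) (x : lat -> C) : x 0 = 1 -> in_closure f (layer_set L) x ->
  forall chi, Gm chi -> dual_lat R f chi -> x chi = ph chi.
Proof.
move=> x0 Hc chi hG hd.
pose c := fun j : 'I_2 => if val j == 0%N then 1 else - ph chi.
pose m := fun j : 'I_2 => if val j == 0%N then chi else 0.
have Hdm : forall j, dual_lat R f (m j).
  by move=> j; rewrite /m; case: (val j == 0%N) => //; exact: dual0.
have Hv : forall t, layer_set L t -> \sum_j c j * char_eval (m j) t = 0.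
  move=> t [Ht Hl]; rewrite !big_ord_recl big_ord0 /c /m /=.
  by rewrite Hl // char_eval0 mul1r mulr1 addr0 subrr.
have := Hc 2%N c m Hdm Hv; rewrite !big_ord_recl big_ord0 /c /m /=.
rewrite x0 mul1r mulr1 addr0 => /eqP; rewrite subr_eq0 => /eqP //.
Qed.

Lemma Hx_lemma (g f : seq lat) (x : lat -> C) B :
  cone_sub R g f -> chart_point g x -> in_closure f (layer_set L) x ->
  int_basis Gm B ->
  (forall b, b \in B -> (forall v : 'rV[R]_n, cone f v -> 0 <= pairing b v) \/
                        (forall v : 'rV[R]_n, cone f v -> pairing b v <= 0)) ->
  forall m m', dual_lat R g m -> dual_lat R g m' -> Gm (m - m') ->
          x m = x m' * ph (m - m').
Proof.
move=> Hgf [x0 Hmul] Hc HB Hsg m m' hm hm' hd.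
have Hfg : forall a, dual_lat R f a -> dual_lat R g a.
  by move=> a ha v hv; apply: ha; apply: Hgf.
have [P [N [hP hN dP dN hPN]]] := dec_lemma HB Hsg hd.
have fP := Hfix x0 Hc hP dP; have fN := Hfix x0 Hc hN dN.
have e : m + N = m' + P by rewrite -[m](subrK m') hPN; apply/rowP => j; rewrite !mxE; ring.
have h1 := Hmul _ _ hm (Hfg _ dN); have h2 := Hmul _ _ hm' (Hfg _ dP).
rewrite e h2 fN fP in h1.
have hN0 := ph_neq0 hN.
apply: (mulIf hN0); rewrite -h1 hPN -mulrA -phD //.
  by rewrite subrK.
by move: (sgB GmS hP hN).
Qed.

End Layer.

Theorem proposition5p1 (R : realType) (n k : nat) (A : 'I_k -> layer R n)
    (F G : seq (seq (lat n))) :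
  (forall i, is_layer (A i)) -> saturated A ->
  smooth_projective_fan R F -> compatible F A ->
  smooth_projective_fan R G -> refinement R G F ->
  compatible G A /\
  (forall i, forall g f, g \in G -> f \in F -> cone_sub R g f ->
     forall x, chart_point g x ->
       (in_closure g (layer_set (A i)) x <-> in_closure f (layer_set (A i)) x)).
Proof.
move=> HA _ _ HcF _ [Href1 _].
split.
  move=> i j Hij; have [B [HB1 HsB HB2]] := HcF i j Hij; exists B; split => //.
  move=> b hb g hg; have [f hf hgf] := Href1 g hg.
  by case: (HsB b hb f hf) => h; [left|right] => v hv; apply: h; apply: hgf.
move=> i g f hg hf hgf x hx; split.
  move=> Hc k' c m hm hv; apply: Hc => // j v hv'; apply: hm; exact: hgf.
move=> Hc k' c m hm hv.
have [B [HB HsB _]] := HcF i i (fun t h => h).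
have HsB' : forall b, b \in B -> (forall v : 'rV[R]_n, cone f v -> 0 <= pairing b v) \/
                        (forall v : 'rV[R]_n, cone f v -> pairing b v <= 0).
  by move=> b hb; apply: HsB.
have Hx := Hx_lemma (HA i) hgf hx Hc HB HsB'.
have := Z (HA i) Hx (s := [seq (c j, m j) | j <- enum 'I_k']).
rewrite big_map big_enum /=; apply.
  by move=> p /mapP [j _ ->]; exact: hm.
by move=> t Kt; rewrite /hs big_map big_enum /=; exact: hv.
Qed.
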